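(* Let $m,g,H,\mathrm{C_dA},\rho,P_0>0$, $\mathrm{C_{rr}}\ge 0$ and $0\le\lambda<1$ be constants. For $D>0$, set $$L(D)=\sqrt{H^2+D^2},\qquad a(D)=m\,g\,(H+\mathrm{C_{rr}}D),\qquad b=\tfrac12\mathrm{C_dA}\,\rho,\qquad c=(1-\lambda)P_0,$$ and let $V(D)$ be the unique positive solution of $$a(D)\,\frac{V}{L(D)}+b\,V^3=c.$$ Define $T(D)=L(D)/V(D)$. Then $$\frac{\mathrm dT}{\mathrm dD}>0\quad\text{for all } D>0.$$ That is, among straight-line ascents with fixed height gain $H$, the ascent time strictly decreases as the horizontal distance $D$ decreases (the climb gets steeper). *)

(* Defs.v *)
From Stdlib Require Import Reals ClassicalEpsilon.
From Coquelicot Require Import Coquelicot.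
Open Scope R_scope.

Definition Lfun (H D : R) : R := sqrt (H ^ 2 + D ^ 2).

Definition afun (m g H Crr D : R) : R := m * g * (H + Crr * D).

Definition bconst (CdA rho : R) : R := / 2 * CdA * rho.

Definition cconst (lam P0 : R) : R := (1 - lam) * P0.

(* V(D): "the" positive solution V of a(D) V / L(D) + b V^3 = c,
   chosen by Hilbert's epsilon (it is unique under the hypotheses). *)
Definition Vfun (m g H Crr CdA rho lam P0 D : R) : R :=
  epsilon (inhabits 0) (fun V => 0 < V /\
    afun m g H Crr D * V / Lfun H D + bconst CdA rho * V ^ 3 = cconst lam P0).

Definition Tfun (m g H Crr CdA rho lam P0 D : R) : R :=
  Lfun H D / Vfun m g H Crr CdA rho lam P0 D.

(* Main.v *)
Require Import Defs.
From Stdlib Require Import Reals Lra Ranalysis5 ClassicalEpsilon.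
From Coquelicot Require Import Coquelicot.
Open Scope R_scope.

Definition fV (b c V : R) : R := b * V ^ 2 - c / V.
Definition gY (b c y : R) : R :=
  epsilon (inhabits 0) (fun V => 0 < V /\ fV b c V = y).

Section S.
Variables b c : R.
Hypothesis hb : 0 < b.
Hypothesis hc : 0 < c.

Lemma fV_incr x y : 0 < x -> x < y -> fV b c x < fV b c y.
Proof.
  intros hx hxy. unfold fV.
  assert (c / y < c / x).
  { unfold Rdiv. apply Rmult_lt_compat_l; auto. apply Rinv_lt_contravar; nra. }
  assert (x ^ 2 < y ^ 2) by nra.
  assert (b * x ^ 2 < b * y ^ 2) by (apply Rmult_lt_compat_l; lra).
  lra.
Qed.

Lemma fV_derive a : 0 < a -> derivable_pt_lim (fV b c) a (2 * b * a + c / a ^ 2).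
Proof.
  intro ha. apply is_derive_Reals. unfold fV.
  auto_derive. lra. field. lra.
Qed.

Lemma fV_cont a : 0 < a -> continuity_pt (fV b c) a.
Proof.
  intro ha. apply derivable_continuous_pt. exists (2 * b * a + c / a ^ 2).
  now apply fV_derive.
Qed.

Lemma fV_exists y : exists V, 0 < V /\ fV b c V = y.
Proof.
  set (lb := Rmin 1 (c / (Rabs y + b + 1))).
  set (ub := Rmax 1 ((Rabs y + c + 1) / b)).
  assert (hy := Rabs_pos y). assert (hy1 := Rle_abs y). assert (hy2 := Rabs_maj2 y).
  assert (hq : 0 < c / (Rabs y + b + 1)) by (apply Rdiv_lt_0_compat; lra).
  assert (hlb : 0 < lb) by (unfold lb; apply Rmin_glb_lt; lra).
  assert (hlb1 : lb <= 1) by apply Rmin_l.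
  assert (hlb2 : lb <= c / (Rabs y + b + 1)) by apply Rmin_r.
  assert (hub1 : 1 <= ub) by apply Rmax_l.
  assert (hub2 : (Rabs y + c + 1) / b <= ub) by apply Rmax_r.
  assert (Hl : fV b c lb < y).
  { unfold fV.
    assert (c / lb >= Rabs y + b + 1).
    { apply Rle_ge. replace (Rabs y + b + 1) with (c / (c / (Rabs y + b + 1))) by (field; lra).
      unfold Rdiv at 1 2. apply Rmult_le_compat_l; [lra|]. apply Rinv_le_contravar; lra. }
    assert (lb ^ 2 <= 1) by nra.
    assert (b * lb ^ 2 <= b * 1) by (apply Rmult_le_compat_l; lra).
    lra. }
  assert (Hu : y < fV b c ub).
  { unfold fV.
    assert (b * ub >= Rabs y + c + 1).
    { apply Rle_ge. replace (Rabs y + c + 1) with (b * ((Rabs y + c + 1) / b)) by (field; lra).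
      apply Rmult_le_compat_l; lra. }
    assert (c / ub <= c).
    { unfold Rdiv. rewrite <- (Rmult_1_r c) at 2. apply Rmult_le_compat_l; [lra|].
      rewrite <- Rinv_1. apply Rinv_le_contravar; lra. }
    assert (ub <= ub ^ 2) by nra.
    assert (b * ub <= b * ub ^ 2) by (apply Rmult_le_compat_l; lra).
    lra. }
  assert (hlu : lb < ub).
  { destruct (Rlt_or_le lb ub) as [h|h]; auto.
    assert (fV b c ub <= fV b c lb).
    { destruct h as [h|h]. left; apply fV_incr; lra. rewrite h; lra. } lra. }
  destruct (IVT_interv (fun V => fV b c V - y) lb ub) as [z [hz1 hz2]].
  - intros a ha. apply continuity_pt_minus. apply fV_cont; lra. apply continuity_pt_const.
    intros u v; reflexivity.
  - exact hlu.
  - lra.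
  - lra.
  - exists z. split; lra.
Qed.

Lemma gY_spec y : 0 < gY b c y /\ fV b c (gY b c y) = y.
Proof.
  unfold gY. apply epsilon_spec. apply fV_exists.
Qed.

Lemma fV_inj x y : 0 < x -> 0 < y -> fV b c x = fV b c y -> x = y.
Proof.
  intros hx hy e. destruct (Rtotal_order x y) as [h|[h|h]]; auto.
  - apply fV_incr in h; lra.
  - apply fV_incr in h; lra.
Qed.

Lemma gY_le x y : x <= y -> gY b c x <= gY b c y.
Proof.
  intro h. destruct (gY_spec x) as [a1 a2]. destruct (gY_spec y) as [b1 b2].
  destruct (Rle_or_lt (gY b c x) (gY b c y)) as [h'|h']; auto.
  apply fV_incr in h'; lra.
Qed.

Lemma gY_derive x :
  derivable_pt_lim (gY b c) x (1 / (2 * b * gY b c x + c / gY b c x ^ 2)).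
Proof.
  assert (Prf : forall a, gY b c (x - 1) <= a <= gY b c (x + 1) -> derivable_pt (fV b c) a).
  { intros a ha. assert (0 < a) by (destruct (gY_spec (x-1)); lra).
    exists (2 * b * a + c / a ^ 2). now apply fV_derive. }
  assert (Hc : continuity_pt (gY b c) x).
  { apply (continuity_pt_recip_interv (fV b c) (gY b c) (gY b c (x - 2)) (gY b c (x + 2))).
    - destruct (Rle_lt_or_eq_dec _ _ (gY_le (x - 2) (x + 2) ltac:(lra))) as [h|h]; auto.
      destruct (gY_spec (x-2)), (gY_spec (x+2)). rewrite h in *. lra.
    - intros u v hu huv hv. apply fV_incr; auto. destruct (gY_spec (x-2)); lra.
    - intros u _ _. unfold comp, id. apply gY_spec.
    - intros u h1 h2. destruct (gY_spec (x-2)) as [_ e1]. destruct (gY_spec (x+2)) as [_ e2].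
      rewrite e1 in h1. rewrite e2 in h2. split; apply gY_le; auto.
    - intros a ha. apply fV_cont. destruct (gY_spec (x-2)); lra.
    - destruct (gY_spec (x-2)) as [_ e1]. destruct (gY_spec (x+2)) as [_ e2].
      rewrite e1, e2. lra. }
  assert (Hi : gY b c (x - 1) <= gY b c x <= gY b c (x + 1)) by (split; apply gY_le; lra).
  assert (Hd : derive_pt (fV b c) (gY b c x) (Prf (gY b c x) Hi)
               = 2 * b * gY b c x + c / gY b c x ^ 2).
  { apply derive_pt_eq_0. apply fV_derive. apply gY_spec. }
  pose proof (derivable_pt_lim_recip_interv (fV b c) (gY b c) (x - 1) (x + 1) x Prf Hc
     ltac:(lra) ltac:(lra) Hi) as K.
  rewrite Hd in K. apply K.
  - intros u _. unfold comp, id. apply gY_spec.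
  - destruct (gY_spec x) as [h _].
    assert (0 < c / gY b c x ^ 2) by (apply Rdiv_lt_0_compat; [lra| apply pow_lt; lra]).
    nra.
Qed.
End S.
Theorem lemma2 (m g H CdA rho P0 Crr lam : R)
  (hm : 0 < m) (hg : 0 < g) (hH : 0 < H) (hCdA : 0 < CdA) (hrho : 0 < rho)
  (hP0 : 0 < P0) (hCrr : 0 <= Crr) (hlam0 : 0 <= lam) (hlam1 : lam < 1) :
  forall D : R, 0 < D ->
    exists l : R, is_derive (Tfun m g H Crr CdA rho lam P0) D l /\ 0 < l.
Proof.
  intros D hD.
  set (b := bconst CdA rho). set (c := cconst lam P0).
  assert (hb : 0 < b) by (unfold b, bconst; nra).
  assert (hc : 0 < c) by (unfold c, cconst; nra).
  set (K := fun D => - afun m g H Crr D / Lfun H D).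
  assert (hL : forall D, 0 < Lfun H D).
  { intro x. unfold Lfun. apply sqrt_lt_R0. nra. }
  assert (HV : forall D, Vfun m g H Crr CdA rho lam P0 D = gY b c (K D)).
  { intro x. destruct (gY_spec b c hb hc (K x)) as [g1 g2].
    assert (Hp : forall V, 0 < V -> (afun m g H Crr x * V / Lfun H x + b * V ^ 3 = c
                                  <-> fV b c V = K x)).
    { intros V hV. unfold fV, K. specialize (hL x). split; intro e.
      - apply Rmult_eq_reg_r with V; [|lra]. rewrite <- e. field. lra.
      - apply Rmult_eq_reg_r with (/ V). 2: apply Rgt_not_eq, Rinv_0_lt_compat; lra.
        replace c with (c / V * V) by (field; lra).
        assert (c / V = b * V ^ 2 + afun m g H Crr x / Lfun H x).
        { revert e. unfold Rdiv. intro e. lra. }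
        rewrite H0. field. lra. }
    unfold Vfun. fold b c.
    destruct (epsilon_spec (inhabits 0) (fun V => 0 < V /\
      afun m g H Crr x * V / Lfun H x + b * V ^ 3 = c)) as [e1 e2].
    { exists (gY b c (K x)). split; auto. apply Hp; auto. }
    apply (fV_inj b c hb hc); auto. rewrite g2. apply Hp; auto. }
  set (L := Lfun H D). set (a := afun m g H Crr D). set (V := gY b c (K D)).
  assert (hLD := hL D). fold L in hLD.
  destruct (gY_spec b c hb hc (K D)) as [hV eV]. fold V in hV, eV.
  assert (dL : is_derive (Lfun H) D (D / L)).
  { unfold L, Lfun. auto_derive. nra. replace (H * (H * 1) + D * (D * 1)) with (H ^ 2 + D ^ 2) by ring. unfold L, Lfun in hLD. field. lra. }
  assert (dK : is_derive K D (- (m * g * Crr * L - a * (D / L)) / L ^ 2)).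
  { unfold K. apply (is_derive_ext (fun x => - (afun m g H Crr x) / Lfun H x)).
    { intro; reflexivity. }
    replace (- (m * g * Crr * L - a * (D / L)) / L ^ 2) with
      (((- (m * g * Crr)) * Lfun H D - (- afun m g H Crr D) * (D / L)) / Lfun H D ^ 2)
      by (unfold L, a; field; apply Rgt_not_eq; exact hLD).
    apply (is_derive_div (fun x => - afun m g H Crr x) (Lfun H)); auto.
    - unfold afun. auto_derive; auto. ring.
    - apply Rgt_not_eq, hL. }
  set (p := 2 * b * V + c / V ^ 2).
  assert (dg : is_derive (gY b c) (K D) (1 / p)).
  { apply is_derive_Reals. apply gY_derive; auto. }
  assert (dgK : is_derive (fun x => gY b c (K x)) D (scal (- (m * g * Crr * L - a * (D / L)) / L ^ 2) (1 / p))).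
  { apply (is_derive_comp (gY b c) K). exact dg. exact dK. }
  exists (((D / L) * V - L * (scal (- (m * g * Crr * L - a * (D / L)) / L ^ 2) (1 / p))) / V ^ 2).
  split.
  - apply (is_derive_ext (fun x => Lfun H x / gY b c (K x))).
    { intro x. unfold Tfun. rewrite HV. reflexivity. }
    apply is_derive_div; auto. apply Rgt_not_eq; exact hV.
  - unfold scal; simpl; unfold mult; simpl.
    assert (ec : c = a * V / L + b * V ^ 3).
    { unfold fV, K in eV. fold L a in eV.
      apply Rmult_eq_reg_r with (/ V). 2: apply Rgt_not_eq, Rinv_0_lt_compat; lra.
      assert (c / V = b * V ^ 2 + a / L) by (unfold Rdiv in *; lra).
      unfold Rdiv in H0. rewrite H0. field. lra. }
    assert (hp : 0 < p).
    { unfold p. assert (0 < c / V ^ 2) by (apply Rdiv_lt_0_compat; [lra| apply pow_lt; lra]). nra. }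
    assert (hN : (D / L) * V - L * (- (m * g * Crr * L - a * (D / L)) / L ^ 2 * (1 / p))
             = (3 * b * D * V ^ 2 / L + m * g * Crr) / p).
    { apply Rmult_eq_reg_r with p; [|lra].
      transitivity (D / L * V * p + (m * g * Crr * L - a * (D / L)) / L).
      { field. split; lra. }
      transitivity (3 * b * D * V ^ 2 / L + m * g * Crr).
      2: { field. lra. }
      unfold p. rewrite ec. field. split; lra. }
    replace (L * (L * 1)) with (L ^ 2) by ring. rewrite hN.
    apply Rdiv_lt_0_compat. 2: nra.
    apply Rdiv_lt_0_compat; [|lra].
    assert (0 < 3 * b * D * V ^ 2 / L).
    { apply Rdiv_lt_0_compat; [|lra]. assert (0 < V ^ 2) by (apply pow_lt; lra).
      assert (0 < b * D) by nra. nra. }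
    assert (0 <= m * g * Crr) by (apply Rmult_le_pos; nra).
    lra.
Qed.
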